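(* There is a universal constant $c>0$ such that for every non-atomic probability measure $\mu$ on a measurable space $\mathcal X$ and every $\epsilon\in(0,1/2]$ there exist a family $\mathcal V$ of probability measures $\nu\ll\mu$ and a number $M_\epsilon>0$ with $$\mathrm{ICov}_{M_\epsilon}(\nu\|\mu)\le M_\epsilon\cdot\epsilon\quad\text{for all }\nu\in\mathcal V,$$ such that the following holds. Any estimator $\widehat Z$ that, for every $\nu\in\mathcal V$ and every $Z>0$, given i.i.d. $X_1,\dots,X_n\sim\mu$ and the values $\lambda(X_i)$ of $\lambda=Z\cdot\frac{d\nu}{d\mu}$, satisfies $(1-\epsilon)Z\le\widehat Z\le(1+\epsilon)Z$ with probability at least $2/3$, must use $n\ge c\,\epsilon^{-1}M_\epsilon$ samples.
   Context: For $\nu\ll\mu$ write $r=\frac{d\nu}{d\mu}$. The coverage is $\mathrm{Cov}_M(\nu\|\mu)=\nu(\{x:r(x)\ge M\})$ and the integrated coverage is $\mathrm{ICov}_M(\nu\|\mu)=\int_0^M\mathrm{Cov}_t(\nu\|\mu)\,dt$. An estimator is a measurable function of $(X_1,\dots,X_n,\lambda(X_1),\dots,\lambda(X_n))$ with no other access to $\nu$, $\lambda$ or $Z$. *)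

(* Defs.v *)
From HB Require Import structures.
From mathcomp Require Import all_boot all_order all_algebra.
From mathcomp Require Import all_classical all_reals all_analysis.
Set Implicit Arguments. Unset Strict Implicit. Unset Printing Implicit Defensive.
Import Order.TTheory GRing.Theory Num.Theory.
Local Open Scope classical_set_scope.
Local Open Scope ring_scope.

Definition non_atomic {R : realType} {d : measure_display} {T : measurableType d}
    (mu : {measure set T -> \bar R}) : Prop :=
  forall A : set T, measurable A -> (0 < mu A)%E ->
    exists B : set T, [/\ measurable B, B `<=` A, (0 < mu B)%E & (mu B < mu A)%E].

(* r is a version of the Radon-Nikodym derivative d nu / d mu
   (this also expresses nu << mu). *)
Definition is_density {R : realType} {d : measure_display} {T : measurableType d}
    (mu nu : {measure set T -> \bar R}) (r : T -> R) : Prop :=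
  [/\ measurable_fun [set: T] r, (forall x, 0 <= r x) &
      forall A : set T, measurable A -> nu A = (\int[mu]_(x in A) (r x)%:E)%E].

Definition Cov {R : realType} {d : measure_display} {T : measurableType d}
    (nu : {measure set T -> \bar R}) (r : T -> R) (M : R) : \bar R :=
  nu [set x | M <= r x].

Definition ICov {R : realType} {d : measure_display} {T : measurableType d}
    (nu : {measure set T -> \bar R}) (r : T -> R) (M : R) : \bar R :=
  (\int[@lebesgue_measure R]_(t in `[0%R, M]%classic) Cov nu r t)%E.

(* P is the law of n i.i.d. samples from mu on the space of n-tuples
   (product rule on measurable rectangles, which characterizes the
   product measure mu^{\otimes n}). *)
Definition is_iid_law {R : realType} {d : measure_display} {T : measurableType d}
    (mu : probability T R) (n : nat) (P : probability (n.-tuple T) R) : Prop :=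
  forall A : 'I_n -> set T, (forall i, measurable (A i)) ->
    P [set x : n.-tuple T | forall i, A i (tnth x i)]
    = ((\prod_(i < n) fine (mu (A i)))%:E)%E.

(* Main.v *)
Require Import Defs.
From HB Require Import structures.
From mathcomp Require Import all_boot all_order all_algebra.
From mathcomp Require Import all_classical all_reals all_analysis.
From mathcomp Require Import measurable_realfun ring lra.
Set Implicit Arguments. Unset Strict Implicit. Unset Printing Implicit Defensive.
Import Order.TTheory GRing.Theory Num.Theory.
Local Open Scope classical_set_scope.
Local Open Scope ring_scope.

Section dens.
Context d (T : measurableType d) (R : realType) (mu : probability T R).
Variable f : T -> R.
Definition dens_hyp := [/\ measurable_fun [set: T] f, (forall x, 0 <= f x) &
   (\int[mu]_x (f x)%:E = 1)%E].
Definition dm (H : dens_hyp) (A : set T) : \bar R := (\int[mu]_(x in A) (f x)%:E)%E.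
Variable H : dens_hyp.

Let dm0 : dm H set0 = 0%E.
Proof. by rewrite /dm integral_set0. Qed.
Let dm_ge0 A : (0 <= dm H A)%E.
Proof. have [_ f0 _] := H; rewrite /dm integral_ge0// => x _; by rewrite lee_fin. Qed.
Let dm_sa : semi_sigma_additive (dm H).
Proof.
have [mf f0 _] := H; apply: semi_sigma_additive_nng_induced => //.
  exact/measurable_EFinP.
Qed.
HB.instance Definition _ := isMeasure.Build _ _ _ (dm H) dm0 dm_ge0 dm_sa.
Let dmT : dm H [set: T] = 1%E.
Proof. by have [_ _ <-] := H; rewrite /dm; congr integral; apply: funext. Qed.
HB.instance Definition _ := @Measure_isProbability.Build _ _ R (dm H) dmT.
End dens.

Section consf.
Context d (T : measurableType d) (n : nat).
Definition consf (p : T * n.-tuple T) : n.+1.-tuple T := [tuple of p.1 :: p.2].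
Lemma mconsf : measurable_fun [set: T * n.-tuple T] consf.
Proof. exact: measurable_cons. Qed.
HB.instance Definition _ := isMeasurableFun.Build _ _ _ _ consf mconsf.
End consf.

Lemma rect_measurable d (T : measurableType d) n (A : 'I_n -> set T) :
  (forall i, measurable (A i)) ->
  measurable [set x : n.-tuple T | forall i, A i (tnth x i)].
Proof.
move=> mA.
have -> : [set x : n.-tuple T | forall i, A i (tnth x i)] =
  \bigcap_(i in [set: 'I_n]) ((@tnth n T)^~ i @^-1` A i).
  by apply/seteqP; split => [x h i _|x h i]; [exact: h|exact: h].
apply: fin_bigcap_measurable; first exact: finite_finset.
move=> i _; rewrite -(setTI (_ @^-1` _)); exact: measurable_tnth.
Qed.

Lemma iid_exists d (T : measurableType d) (R : realType) (mu : probability T R) n :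
  exists P : probability (n.-tuple T) R, is_iid_law mu P.
Proof.
elim: n => [|n [P HP]].
  exists (@dirac _ (0.-tuple T) [tuple] R) => A mA.
  have -> : [set x : 0.-tuple T | forall i, A i (tnth x i)] = setT.
    by apply/seteqP; split => // x _ [].
  by rewrite big_ord0 /= diracE in_setT.
exists (distribution (mu \x P)%E (@consf d T n)) => A mA.
rewrite /distribution /pushforward /=.
have -> : @consf d T n @^-1` [set x | (forall i : 'I_n.+1, A i (tnth x i))] = A ord0 `*` [set t : n.-tuple T | forall j : 'I_n, A (lift ord0 j) (tnth t j)].
  apply/seteqP; split => [[x t]|[x t]] /=.
    move=> h; split; first exact: (h ord0).
    by move=> j; have := h (lift ord0 j); rewrite /consf tnthS.
  move=> [h0 h] i; case: (unliftP ord0 i) => [j ->|->]; last by [].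
  by rewrite /consf tnthS.
rewrite product_measure1E//; last exact: (@rect_measurable _ _ n (fun j : 'I_n => A (lift ord0 j)) (fun j => mA _)).
rewrite big_ord_recl EFinM; congr (_ * _)%E.
  by rewrite fineK// fin_num_measure.
exact: (HP (fun j => A (lift ord0 j)) (fun j => mA _)).
Qed.
Lemma small_set d (T : measurableType d) (R : realType) (mu : probability T R) :
  non_atomic mu -> forall k : nat, exists D, [/\ measurable D,
    0 < fine (mu D) & k.+1%:R * fine (mu D) <= 1].
Proof.
move=> na; elim => [|k [D [mD p0 kp]]].
  exists setT; split => //; first by rewrite probability_setT.
  by rewrite probability_setT /= mul1r.
have muD : mu D = (fine (mu D))%:E by rewrite fineK// fin_num_measure.
have p0' : (0 < mu D)%E by rewrite muD lte_fin.
have [B [mB BD B0 BD']] := na D mD p0'.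
have muB : mu B = (fine (mu B))%:E by rewrite fineK// fin_num_measure.
have b0 : 0 < fine (mu B) by rewrite -lte_fin -muB; exact: B0.
have bp : fine (mu B) < fine (mu D) by rewrite -lte_fin -muB -muD; exact: BD'.
have y1 : 1 <= k.+1%:R :> R by rewrite ler1n.
have [h|h] := leP (2 * fine (mu B)) (fine (mu D)).
  exists B; split => //; rewrite -natr1; nra.
have e : fine (mu (D `\` B)) = fine (mu D) - fine (mu B).
  rewrite measureD//; last by rewrite -ge0_fin_numE ?measure_ge0// fin_num_measure.
  have -> : D `&` B = B by apply/setIidr.
  by rewrite fineB// fin_num_measure.
exists (D `\` B); rewrite e; split => //; first exact: measurableD.
  by rewrite subr_gt0.
rewrite -natr1; nra.
Qed.
Lemma ratr_c (R : realType) : ratr (1 / 60 : rat) = 1 / 60 :> R.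
Proof. by rewrite fmorph_div rmorph1 rmorph_nat. Qed.

Lemma ind_itv (R : realType) (t x : R) : 0 <= t -> \1_(`[0, x]%classic) t = ((t <= x)%R%:R : R).
Proof. by move=> t0; rewrite indicE /= mem_setE in_itv /= t0. Qed.

Lemma bernoulli_ineq (R : realType) (p : R) n : 0 <= p <= 1 -> 1 - n%:R * p <= (1 - p) ^+ n.
Proof.
case/andP => p0 p1; elim: n => [|n IH]; first by rewrite mul0r subr0 expr0.
rewrite exprS -natr1.
have hp : 0 <= 1 - p by rewrite subr_ge0.
have := ler_wpM2l hp IH.
have : 0 <= n%:R * p * p by rewrite mulr_ge0 // mulr_ge0.
nra.
Qed.

Lemma leb_itv_le (R : realType) (x M : R) : (0 <= x)%R ->
  (lebesgue_measure (`[0%R, x]%classic `&` `[0%R, M]%classic) <= x%:E)%E.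
Proof.
move=> x0; apply: (@le_trans _ _ (lebesgue_measure (`[0, x]%classic : set R))).
  by apply: le_measure; rewrite ?inE //; apply: measurableI.
by rewrite lebesgue_measure_itv /= lte_fin; case: ifP => _; rewrite ?oppr0 ?adde0 ?lee_fin. Qed.

Lemma mevent d (T : measurableType d) (R : realType) n
  (Zhat : (n.-tuple T * n.-tuple R)%type -> R) (g : T -> R) (lo hi : R) :
  measurable_fun [set: (n.-tuple T * n.-tuple R)%type] Zhat ->
  measurable_fun [set: T] g ->
  measurable [set x : n.-tuple T | lo <= Zhat (x, map_tuple g x) <= hi].
Proof.
move=> mZ mg.
have mm : measurable_fun [set: n.-tuple T] (fun x => map_tuple g x).
  apply/measurable_fun_tnthP => i.
  rewrite (_ : _ \o _ = g \o (@tnth n T)^~ i); last first.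
    by apply: funext => x /=; rewrite tnth_map.
  exact: measurableT_comp (measurable_tnth i).
have mh : measurable_fun [set: n.-tuple T] (fun x => Zhat (x, map_tuple g x)).
  apply: measurableT_comp mZ _.
  exact: measurable_fun_pair.
have := mh measurableT `[lo, hi]%classic (measurable_itv _).
rewrite setTI; congr measurable; apply/seteqP; split => x /=;
  by rewrite mem_setE in_itv.
Qed.

Lemma key d (T : measurableType d) (R : realType) (P : probability T R)
  (G E1 E2 : set T) : measurable G -> measurable E1 -> measurable E2 ->
  G `&` E1 `&` E2 = set0 ->
  ((2 / 3 : R)%:E <= P E1)%E -> ((2 / 3 : R)%:E <= P E2)%E ->
  (P G <= (2 / 3 : R)%:E)%E.
Proof.
move=> mG m1 m2 h p1 p2.
have sub : G `<=` ~` E1 `|` ~` E2.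
  move=> x Gx; apply/not_andP => -[e1 e2].
  by have : (G `&` E1 `&` E2) x by []; rewrite h.
have hG : (P G <= P (~` E1 `|` ~` E2))%E.
  apply: le_measure sub; rewrite ?inE //.
  by apply: measurableU; apply: measurableC.
have hU : (P (~` E1 `|` ~` E2) <= P (~` E1) + P (~` E2))%E.
  by apply: measureU2; apply: measurableC.
rewrite !probability_setC in hU => //.
have f1 : P E1 \is a fin_num by rewrite fin_num_measure.
have f2 : P E2 \is a fin_num by rewrite fin_num_measure.
have fG : P G \is a fin_num by rewrite fin_num_measure.
move: hG hU p1 p2; rewrite -(fineK f1) -(fineK f2) -(fineK fG).
set u := fine (P (~` E1 `|` ~` E2)).
rewrite -!EFinB -EFinD !lee_fin.
move: (fine _) (fine _) (fine _) => a b c.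
case: (P (~` E1 `|` ~` E2)) => [r| |] /=; rewrite ?lee_fin ?leey ?leNye //; try lra.
Qed.

Section rr.
Context d (T : measurableType d) (R : realType) (mu : probability T R).
Variables (D : set T) (s a : R).
Hypothesis mD : measurable D.
Definition rr x := s * \1_(~` D) x + a * \1_D x.
Lemma rr_in x : D x -> rr x = a.
Proof.
move=> Dx; rewrite /rr !indicE (mem_set Dx) memNset ?mulr0 ?add0r ?mulr1 //.
Qed.
Lemma rr_out x : ~ D x -> rr x = s.
Proof.
move=> Dx; rewrite /rr !indicE (memNset Dx) (@mem_set _ (~` D)) ?mulr0 ?addr0 ?mulr1 //.
Qed.
Lemma mrr : measurable_fun [set: T] rr.
Proof.
apply: measurable_funD; apply: measurable_funM => //;
  apply: measurable_indic => //; exact: measurableC.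
Qed.
Hypotheses (s0 : 0 <= s) (a0 : 0 <= a).
Lemma rr_ge0 x : 0 <= rr x.
Proof. by rewrite /rr addr_ge0 // mulr_ge0. Qed.
Lemma int_rr A : measurable A ->
  (\int[mu]_(x in A) (rr x)%:E = s%:E * mu (~` D `&` A) + a%:E * mu (D `&` A))%E.
Proof.
move=> mA.
have mi1 : measurable_fun A (\1_(~` D) : T -> R).
  by apply: measurable_indic; exact: measurableC.
have mi2 : measurable_fun A (\1_D : T -> R) by exact: measurable_indic.
have m1 : measurable_fun A (fun x => (s * \1_(~` D) x)%:E).
  by apply/measurable_EFinP; apply: measurable_funM.
have m2 : measurable_fun A (fun x => (a * \1_D x)%:E).
  by apply/measurable_EFinP; apply: measurable_funM.
have p1 : forall x, A x -> (0 <= (s * \1_(~` D) x)%:E)%E.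
  by move=> x _; rewrite lee_fin mulr_ge0.
have p2 : forall x, A x -> (0 <= (a * \1_D x)%:E)%E.
  by move=> x _; rewrite lee_fin mulr_ge0.
under eq_integral do rewrite /rr EFinD.
rewrite ge0_integralD //.
under eq_integral do rewrite EFinM.
rewrite ge0_integralZl_EFin //; try (by move=> x _; rewrite lee_fin); try exact/measurable_EFinP.
under [X in (_ + X)%E]eq_integral do rewrite EFinM.
rewrite ge0_integralZl_EFin //; try (by move=> x _; rewrite lee_fin); try exact/measurable_EFinP.
rewrite !integral_indic //; exact: measurableC.
Qed.
End rr.

Theorem theorem9 :
  exists c : rat, 0 < c /\
  forall (R : realType) (d : measure_display) (T : measurableType d)
         (mu : probability T R),
    non_atomic mu ->
    forall eps : R, 0 < eps -> eps <= 1 / 2 ->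
    exists (V : set (probability T R * (T -> R))) (M : R),
      0 < M /\
      (forall nu r, V (nu, r) -> is_density mu nu r) /\
      (forall nu r, V (nu, r) -> (ICov nu r M <= (M * eps)%:E)%E) /\
      forall (n : nat) (Zhat : (n.-tuple T * n.-tuple R)%type -> R),
        measurable_fun [set: (n.-tuple T * n.-tuple R)%type] Zhat ->
        (forall nu r, V (nu, r) ->
         forall Z : R, 0 < Z ->
         forall P : probability (n.-tuple T) R, is_iid_law mu P ->
           (P [set x : n.-tuple T |
                 ((1 - eps) * Z <= Zhat (x, map_tuple (fun y => Z * r y) x)
                  <= (1 + eps) * Z)%R] >= (2 / 3 : R)%:E)%E) ->
        ratr c / eps * M <= n%:R.
Proof.
exists (1 / 60); split; first by [].
move=> R d T mu na eps e0 e12.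
have e20 : 0 < eps ^+ 2 by rewrite exprn_gt0.
have [K eK] : exists K : nat, 1 < K%:R * eps ^+ 2.
  exists (Num.Def.archi_bound ((eps ^+ 2)^-1)).
  have := @archi_boundP R ((eps ^+ 2)^-1) .
  have i0 : 0 <= (eps ^+ 2)^-1 by apply/ltW; rewrite invr_gt0.
  move=> /(_ i0) h.
  have ne : eps ^+ 2 != 0 by rewrite gt_eqF.
  by rewrite -[X in X < _](mulVf ne) ltr_pM2r.
have [D [mD p0 pK]] := @small_set _ _ _ mu na K.
set p := fine (mu D) in p0 pK.
have muD : mu D = p%:E by rewrite /p fineK // fin_num_measure.
have pe : p <= eps ^+ 2.
  move: pK; rewrite -natr1; nra.
set s := (1 - eps) ^+ 2 / (1 + eps).
have e1 : 0 < 1 + eps by lra.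
have hs : s * (1 + eps) = (1 - eps) ^+ 2 by rewrite /s divfK // gt_eqF.
have s0 : 0 < s by rewrite /s divr_gt0 // exprn_gt0 // subr_gt0; lra.
have s1 : s <= 1 by nra.
set q := 1 - s * (1 - p).
have p1 : p <= 1 / 4 by nra.
have q0 : 0 < q by rewrite /q; nra.
have q1 : q <= 1 by rewrite /q; nra.
have q4 : q <= 4 * eps by rewrite /q; nra.
set a := q / p.
have hap : a * p = q by rewrite /a divfK // gt_eqF.
have a0 : 0 < a by rewrite /a divr_gt0.
have sa : s <= a by rewrite /a ler_pdivlMr //; rewrite /q; nra.
pose r2 := @rr _ T R D s a.
have intA A : measurable A ->
    (\int[mu]_(x in A) (r2 x)%:E = s%:E * mu (~` D `&` A) + a%:E * mu (D `&` A))%E.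
  by move=> mA; apply: int_rr => //; apply: ltW.
have rout x : ~ D x -> r2 x = s by move=> Dx; apply: rr_out.
have H2 : dens_hyp mu r2.
  split; first exact: mrr.
    by move=> x; apply: rr_ge0; apply: ltW.
  rewrite intA // !setIT probability_setC // muD -EFinB -!EFinM -EFinD.
  by congr (_%:E); rewrite hap /q; ring.
pose nu2 : probability T R := dm H2.
have nu2D : nu2 D = q%:E.
  rewrite /nu2 /= /dm intA // setICl measure0 mule0 add0e setIid muD.
  by rewrite -EFinM hap.
have nu2T : nu2 setT = 1%E by rewrite probability_setT.
pose V := fun pr : probability T R * (T -> R) => pr = (mu, fun _ => 1) \/ pr = (nu2, r2).
pose M := (1 + q * a) / eps.
have Me : M * eps = 1 + q * a by rewrite /M divfK // gt_eqF.
exists V, M; split; first by rewrite /M divr_gt0 //; nra.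
split.
  move=> nu r [] [-> ->].
    split => //.
    by move=> A mA /=; rewrite integral_cst // mul1e.
  split => //; first exact: mrr.
  by move=> x; apply: rr_ge0; apply: ltW.
split.
  move=> nu r [] [-> ->].
    rewrite /ICov /Cov.
    have -> : (\int[lebesgue_measure]_(t in `[0%R, M]%classic) mu [set _ | (t <= 1)%R] =
       \int[lebesgue_measure]_(t in `[0%R, M]%classic) (\1_(`[0%R, 1]%classic) t)%:E)%E.
      apply: eq_integral.
      move=> t; rewrite inE /= in_itv /= => /andP[t0 _]; rewrite ind_itv //.
      case: (leP t 1) => h.
        have -> : [set _ : T | true] = setT by apply/seteqP; split.
        by rewrite probability_setT.
      have -> : [set _ : T | false] = set0 by apply/seteqP; split.
      by rewrite measure0.
    rewrite integral_indic //.
    apply: (le_trans (leb_itv_le _ _)) => //.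
    by rewrite lee_fin Me; nra.
  rewrite /ICov /Cov.
  have -> : (\int[lebesgue_measure]_(t in `[0%R, M]%classic) nu2 [set x | (t <= r2 x)%R] =
     \int[lebesgue_measure]_(t in `[0%R, M]%classic)
        ((1 - q)%:E * (\1_(`[0%R, s]%classic) t)%:E + q%:E * (\1_(`[0%R, a]%classic) t)%:E))%E.
    apply: eq_integral => t; rewrite inE /= in_itv /= => /andP[t0 _].
    rewrite !ind_itv //.
    have rv x : r2 x = a \/ r2 x = s.
      by case: (pselect (D x)) => Dx; [left; apply: rr_in|right; apply: rout].
    case: (leP t s) => ts.
      rewrite (le_trans ts sa).
      have -> : [set x | t <= r2 x] = setT.
        by apply/seteqP; split => // x _ /=; case: (rv x) => ->; lra.
      by rewrite nu2T -!EFinM -EFinD; congr (_%:E); rewrite /= ?mulr1n ?mulr0n; ring.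
    case: (leP t a) => ta.
      have -> : [set x | t <= r2 x] = D.
        apply/seteqP; split => x /=.
          by case: (pselect (D x)) => // Dx; rewrite rout //; lra.
        by move=> Dx; have -> : r2 x = a by apply: rr_in.
      by rewrite nu2D -!EFinM -EFinD; congr (_%:E); rewrite /= ?mulr1n ?mulr0n; ring.
    have -> : [set x | t <= r2 x] = set0.
      by apply/seteqP; split => // x /=; case: (rv x) => ->; lra.
    by rewrite measure0 -!EFinM -EFinD; congr (_%:E); rewrite /= ?mulr1n ?mulr0n; ring.
  have mI (x : R) : measurable_fun `[0%R, M]%classic (fun t => (\1_(`[0%R, x]%classic) t)%:E).
    by apply/measurable_EFinP; apply: measurable_indic; exact: measurable_itv.
  rewrite ge0_integralD //; first last.
  - apply: measurable_funeM; exact: mI.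
  - by move=> t _; rewrite mule_ge0 // lee_fin //; apply: ltW.
  - apply: measurable_funeM; exact: mI.
  - by move=> t _; rewrite mule_ge0 // lee_fin ?subr_ge0.
  rewrite !ge0_integralZl_EFin //; try exact: mI; try (by move=> t _; rewrite lee_fin);
    try (by apply: ltW); try (by rewrite subr_ge0).
  rewrite !integral_indic //; try exact: measurable_itv.
  apply: (@le_trans _ _ ((1 - q)%:E * s%:E + q%:E * a%:E)%E).
    apply: leeD; apply: lee_wpmul2l.
    - by rewrite lee_fin; lra.
    - exact: (leb_itv_le M (ltW s0)).
    - by rewrite lee_fin; apply: ltW.
    - exact: (leb_itv_le M (ltW a0)).
  by rewrite -!EFinM -EFinD lee_fin Me; nra.
move=> n Zhat mZ Hyp.
have [P HP] := iid_exists mu n.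
have h1 := Hyp mu (fun _ => 1) (or_introl erefl) s s0 P HP.
have h2 := Hyp nu2 r2 (or_intror erefl) 1 ltr01 P HP.
pose G := [set x : n.-tuple T | forall i : 'I_n, (~` D) (tnth x i)].
have mG : measurable G.
  exact: (@rect_measurable _ _ n (fun _ => ~` D) (fun _ => measurableC mD)).
have PG : P G = ((1 - p) ^+ n)%:E.
  transitivity ((\prod_(i < n) fine (mu (~` D)))%:E).
    exact: (HP (fun _ => ~` D) (fun _ => measurableC mD)).
  rewrite prodr_const card_ord probability_setC // muD.
  by [].
have := key mG _ _ _ h1 h2.
have mr2 : measurable_fun [set: T] r2 by exact: mrr.
move=> /(_ (mevent _ _ mZ (measurable_cst _))).
move=> /(_ (mevent _ _ mZ (measurable_funM (measurable_cst _) mr2))).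
have gap : (1 + eps) * s < (1 - eps) * 1.
  rewrite mulr1 mulrC hs; nra.
have disj : G
   `&` [set x | (1 - eps) * s <= Zhat (x, map_tuple (fun=> s * 1) x) <=
                (1 + eps) * s]
   `&` [set x | (1 - eps) * 1 <=
                Zhat (x, map_tuple (fun y : T => 1 * r2 y) x) <=
                (1 + eps) * 1] = set0.
  apply/seteqP; split => // x [[Gx /andP[_ hi]] /andP[lo _]].
  have ex : map_tuple (fun=> s * 1) x = map_tuple (fun y : T => 1 * r2 y) x.
    apply: eq_from_tnth => i; rewrite !tnth_map mul1r mulr1 rout //.
    exact: Gx.
  rewrite ex in hi.
  have := le_trans lo hi; lra.
move=> /(_ disj); rewrite PG lee_fin => hG.
have hb := @bernoulli_ineq R p n.
have np : 1 <= 3 * (n%:R * p).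
  have : 0 <= p <= 1 by apply/andP; split; lra.
  move=> /hb; lra.
rewrite ratr_c.
have -> : 1 / 60 / eps * M = (1 + q * a) / (60 * eps ^+ 2).
  by rewrite /M; field; rewrite gt_eqF.
rewrite ler_pdivrMr; last by rewrite mulr_gt0.
have qa : p * (1 + q * a) <= 17 * eps ^+ 2.
  have -> : p * (1 + q * a) = p + q * q by rewrite -hap; ring.
  have hq0 : q * q <= 16 * eps ^+ 2 by nra.
  lra.
have h60 : 20 * eps ^+ 2 <= p * (n%:R * (60 * eps ^+ 2)) by nra.
rewrite -(ler_pM2l p0); lra.
Qed.
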